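(* There are absolute constants $c>0$ and $K$ such that the following holds. Let $G$ be a finite Abelian group, $\varepsilon>0$, $d\ge1$, $R$ a regular Bohr set of rank $r$, $C=R_\sigma$ a regular Bohr set with $\sigma\le c\varepsilon/(r2^d)$, and $\{A_g\}_{g\in C}$ subsets of $R$ with $\sum_{g\in C}|A_g|\ge2^{-d}|R||C|$. Let $\alpha_g=|A_g|/|G|$, $\alpha=\sum_{g\in C}\alpha_g^2$, $D(x)=|A_x|$ for $x\in C$ and $0$ otherwise, and $f=\sum_{g\in C}1_{A_g}\circ1_{A_g+g}$. Then either (1) $|\langle\mu_f,\mu_D\rangle-\mu(R)^{-1}|\le\varepsilon\mu(R)^{-1}$, or (2) there is an even integer $2\le p\le Kd$ with \[ \Big\|\tfrac1\alpha\sum_{g\in C}(1_{A_g}-\alpha_g\mu_R)\circ(1_{A_g+g}-\alpha_g\mu_{R+g})\Big\|_{p(\mu_C)}\ge\tfrac{\varepsilon}{2}\mu(R)^{-1}. \]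
   Context: Averages normalized over $G$: $\langle f,g\rangle=\mathbb{E}_xf(x)g(x)$, $(f\circ g)(x)=\mathbb{E}_yf(y)g(x+y)$; $\mu(X)=|X|/|G|$, $\mu_X=\frac{|G|}{|X|}1_X$, $\mu_f=f/\mathbb{E}[f]$; for $\nu\ge0$, $\|f\|_{p(\nu)}=(\mathbb{E}_x\nu(x)|f(x)|^p)^{1/p}$. Bohr set: for nonempty $\Gamma\subseteq\widehat G$, $\phi\in[0,2]$, $\mathrm{Bohr}(\Gamma,\phi)=\{x:|1-\gamma(x)|\le\phi\ \forall\gamma\in\Gamma\}$, rank $|\Gamma|$; dilate $B_\rho=\mathrm{Bohr}(\Gamma,\rho\phi)$. $B$ of rank $r$ is regular if for all $0\le\kappa\le1/(100r)$: $|B_{1+\kappa}|\le(1+100\kappa r)|B|$ and $|B_{1-\kappa}|\ge(1-100\kappa r)|B|$. *)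

(* Defs.v *)
From mathcomp Require Import all_boot all_order all_algebra.
From mathcomp Require Import reals complex.
From mathcomp Require Import all_analysis.
Import Order.TTheory GRing.Theory Num.Theory.

Set Implicit Arguments.
Unset Strict Implicit.
Unset Printing Implicit Defensive.

Local Open Scope ring_scope.

Section BohrDefs.
Variables (R : realType) (G : finZmodType).

Definition Eavg (F : G -> R) : R := (\sum_(x : G) F x) / #|G|%:R.
Definition binner (f g : G -> R) : R := Eavg (fun x => f x * g x).
Definition bconv (f g : G -> R) : G -> R := fun x => Eavg (fun y => f y * g (x + y)).
Definition dens (X : {set G}) : R := #|X|%:R / #|G|%:R.
Definition ind (X : {set G}) : G -> R := fun x => (x \in X)%:R.
Definition muS (X : {set G}) : G -> R := fun x => (#|G|%:R / #|X|%:R) * ind X x.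
Definition muf (f : G -> R) : G -> R := fun x => f x / Eavg f.
Definition Lpnorm (p : nat) (nu f : G -> R) : R :=
  (Eavg (fun x => nu x * `|f x| ^+ p)) `^ (p%:R^-1).
Definition translate (A : {set G}) (g : G) : {set G} := [set a + g | a in A].

Definition is_character (gam : {ffun G -> R[i]}) : Prop :=
  (forall x y, gam (x + y) = gam x * gam y) /\ (forall x, `|gam x| = 1).

(* Bohr(Gamma, phi) = {x : |1 - gam(x)| <= phi for all gam in Gamma} ;
   the dilate B_rho is bohr Gamma (rho * phi). *)
Definition bohr (Gam : seq {ffun G -> R[i]}) (phi : R) : {set G} :=
  [set x | all (fun gam : {ffun G -> R[i]} => `|1 - gam x| <= (phi%:C)%C) Gam].

Definition bohr_params (Gam : seq {ffun G -> R[i]}) (phi : R) : Prop :=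
  [/\ Gam != [::], uniq Gam, (forall gam, gam \in Gam -> is_character gam)
    & 0 <= phi <= 2].

Definition brank (Gam : seq {ffun G -> R[i]}) : nat := size Gam.

Definition regular (Gam : seq {ffun G -> R[i]}) (phi : R) : Prop :=
  let r := (brank Gam)%:R in
  forall kappa : R, 0 <= kappa -> kappa <= (100 * r)^-1 ->
    #|bohr Gam ((1 + kappa) * phi)|%:R <= (1 + 100 * kappa * r) * #|bohr Gam phi|%:R
    /\ #|bohr Gam ((1 - kappa) * phi)|%:R >= (1 - 100 * kappa * r) * #|bohr Gam phi|%:R.

End BohrDefs.

Arguments dens {R G} X.
Arguments ind {R G} X _.
Arguments muS {R G} X _.

(* Main.v *)
Require Import Defs.
From mathcomp Require Import all_boot all_order all_algebra.
From mathcomp Require Import reals complex.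
From mathcomp Require Import all_analysis.
From mathcomp Require Import ring lra.
Import Order.TTheory GRing.Theory Num.Theory.
Local Open Scope ring_scope.



Section Bohr.
Set Implicit Arguments.
Unset Strict Implicit.
Variables (R : realType) (G : finZmodType).

Lemma char0 {gam : {ffun G -> R[i]}} : is_character gam -> gam 0 = 1.
Proof.
case=> hM hN; have := hM 0 0; rewrite addr0 => h.
have h0 : gam 0 != 0 by rewrite -normr_eq0 hN oner_eq0.
by apply: (mulfI h0); rewrite mulr1 -h.
Qed.

Lemma charN (gam : {ffun G -> R[i]}) x : is_character gam ->
  `|1 - gam (- x)| = `|1 - gam x|.
Proof.
move=> hc; have := char0 hc; case: hc => hM hN h0.
have e : gam x * gam (-x) = 1 by rewrite -hM subrr.
have -> : 1 - gam (-x) = gam (-x) * (gam x - 1).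
  by rewrite mulrBr mulrC e mulr1.
by rewrite normrM hN mul1r distrC.
Qed.

Lemma charD (gam : {ffun G -> R[i]}) x y : is_character gam ->
  `|1 - gam (x + y)| <= `|1 - gam x| + `|1 - gam y|.
Proof.
case=> hM hN; rewrite hM.
have -> : 1 - gam x * gam y = (1 - gam x) + gam x * (1 - gam y).
  by rewrite mulrBr mulr1 addrA subrK.
by apply: le_trans (ler_normD _ _) _; rewrite normrM hN mul1r.
Qed.

Lemma bohrP (Gam : seq {ffun G -> R[i]}) a x :
  reflect (forall gam, gam \in Gam -> `|1 - gam x| <= (a%:C)%C) (x \in bohr Gam a).
Proof. by rewrite inE; apply: (iffP allP). Qed.

Lemma bohr_add (Gam : seq {ffun G -> R[i]}) a b x y : (forall gam, gam \in Gam -> is_character gam) ->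
  x \in bohr Gam a -> y \in bohr Gam b -> x + y \in bohr Gam (a + b).
Proof.
move=> hc /bohrP hx /bohrP hy; apply/bohrP => gam hg.
apply: le_trans (charD x y (hc _ hg)) _.
by rewrite rmorphD lerD // ?hx ?hy.
Qed.

Lemma bohr_opp (Gam : seq {ffun G -> R[i]}) a x : (forall gam, gam \in Gam -> is_character gam) ->
  x \in bohr Gam a -> - x \in bohr Gam a.
Proof.
move=> hc /bohrP hx; apply/bohrP => gam hg.
rewrite charN; [exact: hx | exact: hc].
Qed.

Lemma bohr_mono (Gam : seq {ffun G -> R[i]}) a b x : a <= b -> x \in bohr Gam a -> x \in bohr Gam b.
Proof.
move=> hab /bohrP hx; apply/bohrP => gam hg.
by apply: le_trans (hx _ hg) _; rewrite lecR.
Qed.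

Lemma bohr0 (Gam : seq {ffun G -> R[i]}) a : (forall gam, gam \in Gam -> is_character gam) -> 0 <= a ->
  0 \in bohr Gam a.
Proof.
move=> hc ha; apply/bohrP => gam hg.
by rewrite (char0 (hc _ hg)) subrr normr0 ler0c.
Qed.

End Bohr.



Section Avg.
Variables (R : realType) (G : finZmodType).
Local Notation N := (#|G|%:R : R).

Lemma N_gt0 : 0 < N.
Proof. by rewrite ltr0n; apply/card_gt0P; exists 0. Qed.

Lemma eq_Eavg (F H : G -> R) : (forall x, F x = H x) -> Eavg F = Eavg H.
Proof. by move=> e; rewrite /Eavg; congr (_ / _); apply: eq_bigr => x _. Qed.

Lemma EavgD (F H : G -> R) : Eavg (fun x => F x + H x) = Eavg F + Eavg H.
Proof. by rewrite /Eavg big_split /= mulrDl. Qed.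

Lemma EavgB (F H : G -> R) : Eavg (fun x => F x - H x) = Eavg F - Eavg H.
Proof. by rewrite /Eavg sumrB mulrBl. Qed.

Lemma EavgZ (k : R) (F : G -> R) : Eavg (fun x => k * F x) = k * Eavg F.
Proof. by rewrite /Eavg -mulr_sumr mulrA. Qed.

Lemma Eavg_sum (I : finType) (P : pred I) (F : I -> G -> R) :
  Eavg (fun x => \sum_(i | P i) F i x) = \sum_(i | P i) Eavg (F i).
Proof. by rewrite /Eavg exchange_big /= mulr_suml. Qed.

Lemma ler_Eavg (F H : G -> R) : (forall x, F x <= H x) -> Eavg F <= Eavg H.
Proof.
move=> h; rewrite /Eavg ler_pM2r ?invr_gt0 ?N_gt0 //.
by apply: ler_sum => x _.
Qed.

Lemma Eavg_ge0 (F : G -> R) : (forall x, 0 <= F x) -> 0 <= Eavg F.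
Proof.
move=> h; rewrite /Eavg mulr_ge0 ?invr_ge0 ?ler0n //.
by apply: sumr_ge0 => x _.
Qed.

Lemma norm_Eavg (F : G -> R) : `|Eavg F| <= Eavg (fun x => `|F x|).
Proof.
rewrite /Eavg normrM [`|_^-1|]ger0_norm ?invr_ge0 ?ler0n //.
by rewrite ler_pM2r ?invr_gt0 ?N_gt0 // ler_norm_sum.
Qed.

Lemma sum_shift (F : G -> R) (s : G) : \sum_x F (x + s) = \sum_x F x.
Proof. by rewrite [RHS](reindex_inj (addIr s)). Qed.

Lemma Eavg_bconv (F H : G -> R) : Eavg (bconv F H) = Eavg F * Eavg H.
Proof.
rewrite /bconv /Eavg -mulr_suml exchange_big /=.
under eq_bigr => y _ do rewrite -mulr_sumr (sum_shift (fun z => H z) y).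
rewrite -mulr_suml; field; apply/lt0r_neq0; exact: N_gt0.
Qed.

Lemma sum_ind (A : {set G}) : \sum_x (ind A x : R) = #|A|%:R.
Proof.
rewrite /ind (eq_bigr (fun x => if x \in A then 1 else 0)); last by move=> x _; case: (x \in A).
by rewrite -big_mkcond /= sumr_const.
Qed.

Lemma Eavg_ind (A : {set G}) : Eavg (ind A) = (dens A : R).
Proof. by rewrite /Eavg sum_ind. Qed.

Lemma mem_translate (A : {set G}) g y : (y \in translate A g) = (y - g \in A).
Proof.
apply/imsetP/idP => [[a ha ->]|h]; first by rewrite addrK.
by exists (y - g) => //; rewrite subrK.
Qed.

Lemma card_translate (A : {set G}) g : #|translate A g| = #|A|.
Proof. by rewrite /translate card_imset //; exact: addIr. Qed.

Lemma ind_translate (A : {set G}) g y : (ind (translate A g) y : R) = ind A (y - g).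
Proof. by rewrite /ind mem_translate. Qed.

Lemma ind_ge0 (A : {set G}) y : 0 <= (ind A y : R).
Proof. by rewrite /ind ler0n. Qed.

Lemma ind_le1 (A : {set G}) y : (ind A y : R) <= 1.
Proof. by rewrite /ind; case: (y \in A). Qed.

Definition cnt (S T : {set G}) (s : G) : R := \sum_y ind S y * ind T (y + s).

Lemma cntC (S T : {set G}) s : cnt S T s = cnt T S (- s).
Proof.
rewrite /cnt -(sum_shift (fun y => ind S y * ind T (y + s)) (- s)).
by apply: eq_bigr => y _; rewrite subrK mulrC.
Qed.

Lemma cnt_bound (T S S' : {set G}) s :
  T \subset S -> S' \subset S -> (forall y, y \in S' -> y + s \in S) ->
  #|T|%:R - (#|S|%:R - #|S'|%:R) <= cnt T S s <= #|T|%:R.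
Proof.
move=> hTS hS'S hs; apply/andP; split; last first.
  rewrite -sum_ind; apply: ler_sum => y _.
  by rewrite -[X in _ <= X]mulr1 ler_wpM2l ?ind_ge0 ?ind_le1.
rewrite -!sum_ind /cnt lerBlDr -sumrB -big_split /=.
apply: ler_sum => y _; rewrite /ind.
case yT: (y \in T); case yS: (y \in S); case yS': (y \in S');
  case ysS: (y + s \in S) => //=; rewrite ?mul0r ?mul1r ?subrr ?add0r ?addr0 ?subr0 //.
all: first [lra | by move: (subsetP hS'S y); rewrite yS yS' => /(_ isT)
  | by move: (hs y); rewrite yS' ysS => /(_ isT)
  | by move: (subsetP hTS y); rewrite yT yS => /(_ isT)].
Qed.

End Avg.
Arguments cnt {R G}.



Section Conv.
Variables (R : realType) (G : finZmodType).
Local Notation N := (#|G|%:R : R).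

Lemma bconv_decomp (a b u v : G -> R) (k : R) x :
  bconv a b x = bconv (fun y => a y - k * u y) (fun y => b y - k * v y) x
    + k * bconv u b x + k * bconv a v x - k ^+ 2 * bconv u v x.
Proof.
rewrite /bconv -!EavgZ -!EavgD -EavgB; apply: eq_Eavg => y; ring.
Qed.

Lemma shiftE (x y g : G) : x + y - g = y + (x - g).
Proof. by rewrite [x + y]addrC -addrA. Qed.

Lemma conv_ub (S T : {set G}) g x :
  bconv (muS S : G -> R) (ind (translate T g)) x = cnt T S (g - x) / #|S|%:R.
Proof.
rewrite /bconv /muS /Eavg -opprB -cntC /cnt.
rewrite (eq_bigr (fun y => (N * #|S|%:R^-1) * (ind S y * ind T (y + (x - g))))); last first.
  by move=> y _; rewrite ind_translate shiftE; ring.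
rewrite -mulr_sumr; move: (#|S|%:R^-1) => s; field; apply/lt0r_neq0; exact: N_gt0.
Qed.

Lemma conv_av (S T : {set G}) g x :
  bconv (ind T : G -> R) (muS (translate S g)) x = cnt T S (x - g) / #|S|%:R.
Proof.
rewrite /bconv /muS /Eavg /cnt card_translate.
rewrite (eq_bigr (fun y => (N * #|S|%:R^-1) * (ind T y * ind S (y + (x - g))))); last first.
  by move=> y _; rewrite ind_translate shiftE; ring.
rewrite -mulr_sumr; move: (#|S|%:R^-1) => s; field; apply/lt0r_neq0; exact: N_gt0.
Qed.

Lemma conv_uv (S : {set G}) g x :
  bconv (muS S : G -> R) (muS (translate S g)) x = N * cnt S S (x - g) / #|S|%:R ^+ 2.
Proof.
rewrite /bconv /muS /Eavg /cnt card_translate.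
rewrite (eq_bigr (fun y => (N * #|S|%:R^-1) * (N * #|S|%:R^-1) * (ind S y * ind S (y + (x - g))))); last first.
  by move=> y _; rewrite ind_translate shiftE; ring.
rewrite -mulr_sumr -exprVn; move: (#|S|%:R^-1) => s; field; apply/lt0r_neq0; exact: N_gt0.
Qed.

Lemma cauchy_schwarz (C : {set G}) (a : G -> R) :
  (\sum_(g in C) a g) ^+ 2 <= #|C|%:R * \sum_(g in C) a g ^+ 2.
Proof.
have [C0|Cpos] := eqVneq #|C| 0%N.
  rewrite C0 mul0r; move/eqP: C0; rewrite cards_eq0 => /eqP ->.
  by rewrite big_set0 expr0n.
set S := \sum_(g in C) a g; set n : R := #|C|%:R.
have n0 : 0 < n by rewrite ltr0n lt0n.
set t := S / n.
have h : 0 <= \sum_(g in C) (a g - t) ^+ 2 by apply: sumr_ge0 => g _; exact: sqr_ge0.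
have e : \sum_(g in C) (a g - t) ^+ 2 = \sum_(g in C) a g ^+ 2 - (2 * t) * S + n * t ^+ 2.
  rewrite (eq_bigr (fun g => (a g ^+ 2 - (2 * t) * a g) + t ^+ 2)); last by move=> g _; ring.
  by rewrite big_split sumrB /= -mulr_sumr sumr_const -[t ^+ 2 *+ _]mulr_natl.
rewrite e /t in h.
have : 0 <= n * (\sum_(g in C) a g ^+ 2) - S ^+ 2.
  have -> : n * (\sum_(g in C) a g ^+ 2) - S ^+ 2 =
     n * (\sum_(g in C) a g ^+ 2 - 2 * (S / n) * S + n * (S / n) ^+ 2).
    field; exact: lt0r_neq0.
  by apply: mulr_ge0 => //; exact: ltW.
by rewrite subr_ge0.
Qed.

Lemma bernoulli_nat (t : R) n : 0 <= t -> n.+1%:R * t <= t ^+ n.+1 + n%:R.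
Proof.
move=> t0; elim: n => [|n IH]; first by rewrite mul1r expr1 addr0.
have h : t * (n.+1%:R * t) <= t * (t ^+ n.+1 + n%:R) by rewrite ler_wpM2l.
rewrite exprS.
have e1 : (n.+2%:R : R) = n%:R + 2 by rewrite -natr1 -natr1; ring.
have e2 : (n.+1%:R : R) = n%:R + 1 by rewrite -natr1.
rewrite e1 e2 in h *.
have hn : 0 <= (n%:R : R) by rewrite ler0n.
have hq : 0 <= (n%:R + 1) * (t - 1) ^+ 2 by apply: mulr_ge0; [lra | exact: sqr_ge0].

nra.
Qed.

Lemma young (z l : R) p : 0 <= z -> 0 < l -> (0 < p)%N ->
  p%:R * l ^+ p.-1 * z <= z ^+ p + p.-1%:R * l ^+ p.
Proof.
move=> z0 l0; case: p => // n _ /=.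
have t0 : 0 <= z / l by rewrite divr_ge0 // ltW.
have h := @bernoulli_nat (z / l) n t0.
have lp : 0 < l ^+ n.+1 by rewrite exprn_gt0.
have := ler_wpM2r (ltW lp) h.
rewrite mulrDl exprMn exprVn mulfVK ?(lt0r_neq0 lp) //.
have -> : n.+1%:R * (z / l) * l ^+ n.+1 = n.+1%:R * l ^+ n * z.
  rewrite exprS; field; exact: lt0r_neq0.
by [].
Qed.

End Conv.



Section Real.
Set Implicit Arguments.
Unset Strict Implicit.
Variable R : realType.

Lemma err_bound (a nR Nn k1 k2 k3 del : R) :
  0 <= a -> a <= nR -> 0 < nR -> 0 < Nn -> 0 <= del ->
  a - del * nR <= k1 -> k1 <= a -> a - del * nR <= k2 -> k2 <= a ->
  nR - del * nR <= k3 -> k3 <= nR ->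
  `| (a / Nn) * (k1 / nR + k2 / nR - (a / Nn) * (Nn * k3 / nR ^+ 2))
      - (a / Nn) ^+ 2 * (Nn / nR) | <= 2 * del * (a / Nn).
Proof.
move=> a0 anR nR0 N0 d0 h1 h1' h2 h2' h3 h3'.
have -> : (a / Nn) * (k1 / nR + k2 / nR - (a / Nn) * (Nn * k3 / nR ^+ 2))
      - (a / Nn) ^+ 2 * (Nn / nR)
   = (a / (Nn * nR)) * (k1 + k2 - a * (k3 / nR) - a).
  by field; apply/andP; split; apply: lt0r_neq0.
have q1 : 1 - del <= k3 / nR.
  by rewrite ler_pdivlMr //; nra.
have q2 : k3 / nR <= 1.
  by rewrite ler_pdivrMr //; nra.
have c0 : 0 <= a / (Nn * nR) by rewrite divr_ge0 // mulr_ge0 // ltW.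
set q := k3 / nR in q1 q2 *.
have hX : `| k1 + k2 - a * q - a | <= 2 * del * nR.
  rewrite ler_norml; apply/andP; split; nra.
rewrite normrM ger0_norm //.
have -> : 2 * del * (a / Nn) = (a / (Nn * nR)) * (2 * del * nR).
  by field; apply/andP; split; apply: lt0r_neq0.
by rewrite ler_wpM2l.
Qed.


Lemma ar_Q (S1 alpha nC nR N M : R) :
  0 < S1 -> 0 < alpha -> 0 < nC -> 0 < nR -> 0 < N -> 0 < M ->
  S1 ^+ 2 <= nC * alpha -> M^-1 * nR * nC / N <= S1 ->
  S1 / alpha <= M * (N / nR).
Proof.
move=> S0 a0 C0 R0 N0 M0 hcs hlb.
have h1 : nC * nR <= M * N * S1.
  move: hlb; rewrite ler_pdivrMr // => h.
  have := ler_wpM2l (ltW M0) h; rewrite !mulrA mulfV ?mul1r; last by apply: lt0r_neq0.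
  move=> h'; nra.
rewrite ler_pdivrMr // mulrA mulrAC ler_pdivlMr //.
rewrite -(ler_pM2l S0).
have h2 : S1 * S1 * nR <= nC * alpha * nR by apply: ler_wpM2r; [exact: ltW | rewrite -expr2].
have h3 : nC * nR * alpha <= M * N * S1 * alpha by apply: ler_wpM2r => //; exact: ltW.
nra.
Qed.

Lemma ar_bigeps (X M u eps : R) : 0 <= X -> X <= M * u -> M <= eps -> 1 <= M -> 0 < u ->
  `|X - u| <= eps * u.
Proof. move=> X0 XM Me M1 u0; rewrite ler_norml; apply/andP; split; nra. Qed.

Lemma ar_sigma (sigma eps r M : R) : 0 < sigma -> 0 < eps -> 1 <= r -> 2 <= M -> eps < M ->
  sigma <= 1600^-1 * eps / (r * M) ->
  100 * (2 * sigma) * r * M * 8 <= eps /\ 2 * sigma <= (100 * r)^-1.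
Proof.
move=> s0 e0 r1 M2 eM.
rewrite ler_pdivlMr; last by apply: mulr_gt0; lra.
rewrite [_ * eps]mulrC ler_pdivlMr; last lra.
move=> h; split; first lra.
have p100 : 0 < 100 * r by lra.
rewrite -(ler_pM2r p100) mulVf; last exact: lt0r_neq0.
have h1 : sigma * r * 1600 * M <= M by lra.
have h2 : sigma * r * 1600 <= 1.
  by rewrite -(ler_pM2r (_ : 0 < M)) ?mul1r //; lra.
nra.
Qed.


Lemma powR_bound (S th : R) (p : nat) : (0 < p)%N -> 0 <= S -> 0 <= th ->
  S `^ (p%:R^-1) < th -> S <= th ^+ p.
Proof.
move=> p0 S0 th0 h; rewrite leNgt; apply/negP => h'.
have pr : 0 < (p%:R : R)^-1 by rewrite invr_gt0 ltr0n.
have m1 : th ^+ p \in Num.nneg by rewrite nnegrE exprn_ge0.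
have m2 : S \in Num.nneg by rewrite nnegrE.
have := gt0_ltr_powR pr m1 m2 h'.
rewrite -powR_mulrn // -powRrM mulfV ?powRr1 //; last by rewrite pnatr_eq0 -lt0n.
by move=> h2; move: (lt_trans h h2); rewrite ltxx.
Qed.

Lemma M_bound (d : R) : 1 <= d -> 2 `^ d <= (3/2) ^+ (4 * (Num.truncn d).+1).
Proof.
move=> d1.
have h1 : d <= (Num.truncn d).+1%:R by apply: ltW; apply: Num.Theory.truncnS_gt.
apply: le_trans (_ : 2 `^ ((Num.truncn d).+1%:R) <= _).
  by apply: ler_powR => //; lra.
rewrite powR_mulrn; last lra.
rewrite exprM.
apply: lerXn2r; rewrite ?nnegrE; last by rewrite !exprS expr0; lra.
- lra.
- by apply: exprn_ge0; lra.
Qed.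

Lemma p_bound (d : R) : 1 <= d -> ((4 * (Num.truncn d).+1)%N%:R : R) <= 8 * d.
Proof.
move=> d1; have h : ((Num.truncn d)%:R : R) <= d by rewrite Num.Theory.truncn_le; lra.
rewrite natrM -natr1; lra.
Qed.

Lemma ar_final (X u eps del M lam A1 A2 : R) : 0 < u -> 0 <= del ->
  `|A1| <= lam -> `|A2| <= 2 * del * (M * u) -> lam = 3 / 2 * (eps / 2 * u) ->
  del * M * 8 <= eps -> X - u = A1 + A2 -> `|X - u| <= eps * u.
Proof.
move=> u0 d0 h1 h2 hl hd ->.
have h3 : 2 * del * (M * u) * 4 <= eps * u.
  have := ler_wpM2r (ltW u0) hd; lra.
apply: le_trans (ler_normD _ _) _.
lra.
Qed.

End Real.



Theorem lemma4p4 (R : realType) :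
  exists c K : R, 0 < c /\
  forall (G : finZmodType) (eps d sigma phi : R)
         (Gam : seq {ffun G -> R[i]}) (A : G -> {set G}),
    0 < eps -> 1 <= d ->
    bohr_params Gam phi -> regular Gam phi ->
    0 < sigma -> bohr_params Gam (sigma * phi) -> regular Gam (sigma * phi) ->
    sigma <= c * eps / ((brank Gam)%:R * 2 `^ d) ->
    let RB := bohr Gam phi in
    let C := bohr Gam (sigma * phi) in
    (forall g, g \in C -> A g \subset RB) ->
    \sum_(g in C) (#|A g|%:R : R) >= 2 `^ (- d) * #|RB|%:R * #|C|%:R ->
    let alphag : G -> R := fun g => dens (A g) in
    let alpha : R := \sum_(g in C) alphag g ^+ 2 in
    let D : G -> R := fun x => if x \in C then (#|A x|%:R : R) else 0 in
    let f : G -> R := fun x => \sum_(g in C) bconv (@ind R G (A g)) (@ind R G (translate (A g) g)) x in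
    `|binner (muf f) (muf D) - (dens RB)^-1| <= eps * (dens RB)^-1
    \/
    exists p : nat, [/\ ~~ odd p, (2 <= p)%N, p%:R <= K * d &
      Lpnorm p (muS C)
        (fun x : G => alpha^-1 * \sum_(g in C)
           bconv (fun y => ind (A g) y - alphag g * muS RB y)
                (fun y => ind (translate (A g) g) y - alphag g * muS (translate RB g) y) x)
      >= eps / 2 * (dens RB)^-1].
Proof.
exists (1600^-1), 8; split; first lra.
move=> G eps d sigma phi Gam A eps0 d1 [Gne Guniq Gchar /andP[phi0 phi2]] regR sig0 _ _ hsig
  RB C hA hsum alphag alpha D f.
set N : R := #|G|%:R.
have N0 : 0 < N := N_gt0 R G.
set r : R := (brank Gam)%:R.
have r1 : 1 <= r.
  by rewrite /r /brank ler1n lt0n size_eq0.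
set M : R := 2 `^ d.
have M2 : 2 <= M.
  by rewrite /M -{1}(powRr1 (_ : 0 <= 2)) // ler_powR // ler1n.
have Minv : 2 `^ (- d) = M^-1 by rewrite powRN.
set nR : R := #|RB|%:R.
set nC : R := #|C|%:R.
have RB0 : (0 : G) \in RB by apply: bohr0.
have C0 : (0 : G) \in C by apply: bohr0 => //; rewrite mulr_ge0 // ltW.
have nR0 : 0 < nR by rewrite ltr0n; apply/card_gt0P; exists 0.
have nC0 : 0 < nC by rewrite ltr0n; apply/card_gt0P; exists 0.
have densR : (dens RB)^-1 = N / nR by rewrite /dens invf_div.
rewrite densR.
have hAc g : g \in C -> (#|A g|%:R : R) <= nR.
  by move=> hg; rewrite ler_nat; apply: subset_leq_card; apply: hA.
set S1 : R := \sum_(g in C) alphag g.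
have hS1E : S1 = (\sum_(g in C) (#|A g|%:R : R)) / N.
  by rewrite /S1 mulr_suml.
have hS1lb : M^-1 * nR * nC / N <= S1.
  by rewrite hS1E ler_pM2r ?invr_gt0 // -Minv.
have hS1pos : 0 < S1.
  apply: lt_le_trans hS1lb; apply: divr_gt0 => //; apply: mulr_gt0 => //.
  apply: mulr_gt0 => //; rewrite invr_gt0; lra.
have halpha : S1 ^+ 2 <= nC * alpha by apply: cauchy_schwarz.
have alpha0 : 0 < alpha.
  have : 0 < S1 ^+ 2 by rewrite exprn_gt0.
  move=> h; have : 0 < nC * alpha by lra.
  by rewrite pmulr_rgt0.
have Mp : 0 < M by lra.
have hQ' : S1 / alpha <= M * (N / nR) := ar_Q hS1pos alpha0 nC0 nR0 N0 Mp halpha hS1lb.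
have hEf : Eavg f = alpha.
  rewrite /f Eavg_sum /alpha; apply: eq_bigr => g _.
  by rewrite Eavg_bconv !Eavg_ind /dens card_translate /alphag /dens expr2.
have hED : Eavg D = S1.
  rewrite hS1E /Eavg /D; congr (_ / _).
  by rewrite [RHS]big_mkcond.
set w : G -> R := fun x => D x / S1.
have hX : binner (muf f) (muf D) = Eavg (fun x => f x / alpha * w x).
  by rewrite /binner /muf hEf hED.
rewrite hX.
have hEw : Eavg w = 1.
  rewrite (@eq_Eavg R G w (fun x => S1^-1 * D x)); last by move=> x; rewrite mulrC.
  by rewrite EavgZ hED mulVf //; apply: lt0r_neq0.
have w0 x : 0 <= w x.
  apply: divr_ge0; last exact: ltW.
  by rewrite /D; case: (x \in C) => //; exact: ler0n.
have wC x : x \notin C -> w x = 0.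
  by move=> hx; rewrite /w /D (negbTE hx) mul0r.
have wM x : w x <= M * muS C x.
  rewrite /w /D /muS /ind; case hx: (x \in C); last by rewrite mul0r mulr0 mulr0.
  rewrite mulr1 ler_pdivrMr // .
  have := hAc x hx => h1.
  have h2 : nR = M * (N / nC) * (M^-1 * nR * nC / N).
    by field; rewrite !lt0r_neq0.
  apply: le_trans h1 _; rewrite {1}h2 -/N -/nC; apply: ler_wpM2l => //.
  by apply: mulr_ge0; [apply: ltW | apply: divr_ge0; apply: ltW].
have bconv_le (a b : G -> R) x : (forall y, 0 <= a y) -> (forall y, b y <= 1) ->
    bconv a b x <= Eavg a.
  move=> ha hb; apply: ler_Eavg => y.
  by rewrite -[X in _ <= X]mulr1 ler_wpM2l.
have bconv_ge0 (a b : G -> R) x : (forall y, 0 <= a y) -> (forall y, 0 <= b y) ->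
    0 <= bconv a b x.
  by move=> ha hb; apply: Eavg_ge0 => y; apply: mulr_ge0.
have f0 x : 0 <= f x.
  by apply: sumr_ge0 => g _; apply: bconv_ge0 => y; apply: ind_ge0.
have fS1 x : f x <= S1.
  apply: ler_sum => g _; rewrite /alphag -Eavg_ind.
  by apply: bconv_le => y; [apply: ind_ge0 | apply: ind_le1].
set u : R := N / nR.
have u0 : 0 < u by apply: divr_gt0.
have [epsM|epsM] := leP M eps.
  left.
  have X0 : 0 <= Eavg (fun x => f x / alpha * w x).
    apply: Eavg_ge0 => x; apply: mulr_ge0 => //; apply: divr_ge0 => //; exact: ltW.
  have XM : Eavg (fun x => f x / alpha * w x) <= M * u.
    apply: le_trans hQ'.
    have -> : S1 / alpha = Eavg (fun x => S1 / alpha * w x) by rewrite EavgZ hEw mulr1.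
    apply: ler_Eavg => x; apply: ler_wpM2r => //.
    by rewrite ler_pM2r ?invr_gt0.
  have M1 : 1 <= M by lra.
  exact: ar_bigeps X0 XM epsM M1 u0.
have [hdelM kap1] := ar_sigma sig0 eps0 r1 M2 epsM hsig.
set del : R := 100 * (2 * sigma) * r.
have del0 : 0 <= del by rewrite /del; apply: mulr_ge0; [apply: mulr_ge0|]; lra.
have [_ hreg] := regR (2 * sigma) (ltW (mulr_gt0 (ltr0n _ 2) sig0)) kap1.
set R' := bohr Gam ((1 - 2 * sigma) * phi).
have hreg' : (1 - del) * nR <= #|R'|%:R by [].
have sp0 : 0 <= sigma * phi by apply: mulr_ge0 => //; exact: ltW.
have hR'sub : R' \subset RB.
  apply/subsetP => y; apply: bohr_mono.
  rewrite mulrBl mul1r -mulrA; lra.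
have hshift s : s \in bohr Gam (sigma * phi + sigma * phi) -> forall y, y \in R' -> y + s \in RB.
  move=> hs y hy; have := bohr_add Gchar hy hs.
  by rewrite (_ : (1 - 2 * sigma) * phi + (sigma * phi + sigma * phi) = phi) //; ring.
have hcnt (T : {set G}) s : T \subset RB -> s \in bohr Gam (sigma * phi + sigma * phi) ->
    #|T|%:R - del * nR <= cnt T RB s /\ (cnt T RB s : R) <= #|T|%:R.
  move=> hT hs; have /andP[h1 h2] := @cnt_bound R G _ _ _ _ hT hR'sub (hshift s hs).
  split; [apply: le_trans _ h1; rewrite -/nR; lra | exact: h2].
have hdiff x g : x \in C -> g \in C -> x - g \in bohr Gam (sigma * phi + sigma * phi).
  by move=> hx hg; apply: bohr_add Gchar hx (bohr_opp Gchar hg).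
pose Eg x g := alphag g * bconv (muS RB) (ind (translate (A g) g)) x
   + alphag g * bconv (ind (A g)) (muS (translate RB g)) x
   - alphag g ^+ 2 * bconv (muS RB) (muS (translate RB g)) x - alphag g ^+ 2 * u.
have hE x g : x \in C -> g \in C -> `|Eg x g| <= 2 * del * alphag g.
  move=> hx hg; rewrite /Eg conv_ub conv_av conv_uv.
  have [l1 u1] := hcnt (A g) (g - x) (hA g hg) (hdiff g x hg hx).
  have [l2 u2] := hcnt (A g) (x - g) (hA g hg) (hdiff x g hx hg).
  have [l3 u3] := hcnt RB (x - g) (subxx RB) (hdiff x g hx hg).
  have := err_bound (ler0n _ #|A g|) (hAc g hg) nR0 N0 del0 l1 u1 l2 u2 l3 u3.
  rewrite /alphag /dens /u -/N -/nR.
  set k1 := cnt _ _ _; set k2 := cnt _ _ _; set k3 := cnt _ _ _.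
  set a : R := #|A g|%:R.
  by congr (`| _ | <= _); ring.
pose Ff := fun x : G => alpha^-1 * \sum_(g in C)
           bconv (fun y => ind (A g) y - alphag g * muS RB y)
                (fun y => ind (translate (A g) g) y - alphag g * muS (translate RB g) y) x.
have hdec x : f x = alpha * Ff x + \sum_(g in C) Eg x g + alpha * u.
  rewrite /Ff mulVKf; last exact: lt0r_neq0.
  rewrite /alpha mulr_suml -big_split -big_split /f /=.
  apply: eq_bigr => g _.
  rewrite (@bconv_decomp R G _ _ (muS RB) (muS (translate RB g)) (alphag g) x) /Eg.
  ring.
have hT x : x \in C -> `|f x / alpha - Ff x - u| <= 2 * del * (M * u).
  move=> hx.
  have -> : f x / alpha - Ff x - u = (\sum_(g in C) Eg x g) / alpha.
    rewrite hdec; field; exact: lt0r_neq0.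
  rewrite normrM [`|alpha^-1|]gtr0_norm ?invr_gt0 //.
  apply: le_trans (_ : 2 * del * S1 / alpha <= _); last first.
    rewrite -mulrA; apply: ler_wpM2l; first by apply: mulr_ge0 => //; lra.
    exact: hQ'.
  rewrite ler_pM2r ?invr_gt0 //.
  apply: le_trans (ler_norm_sum _ _ _) _.
  rewrite /S1 mulr_sumr; apply: ler_sum => g hg; exact: hE.
pose n := Num.truncn d.
pose p := (4 * n.+1)%N.
have p0 : (0 < p)%N by rewrite /p muln_gt0.
set th := eps / 2 * u.
have th0 : 0 < th by rewrite /th; apply: mulr_gt0 => //; lra.
have [hL|hL] := leP th (Lpnorm p (muS C) Ff).
  right; exists p; split => //.
  - by rewrite /p oddM.
  - by rewrite /p mulnS.
  - exact: p_bound.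
left.
pose Sp := Eavg (fun x => muS C x * `|Ff x| ^+ p).
have Sp0 : 0 <= Sp.
  apply: Eavg_ge0 => x; apply: mulr_ge0; last exact: exprn_ge0.
  rewrite /muS; apply: mulr_ge0; [apply: divr_ge0; exact: ler0n | exact: ind_ge0].
have hSp : Sp <= th ^+ p by apply: powR_bound => //; exact: ltW.
pose lam := 3 / 2 * th.
have lam0 : 0 < lam by rewrite /lam; apply: mulr_gt0 => //; lra.
have hMl : M * th ^+ p <= lam ^+ p.
  rewrite /lam (exprMn p (3 / 2) th); apply: ler_wpM2r; first by apply: exprn_ge0; exact: ltW.
  exact: M_bound.
have hW : Eavg (fun x => w x * `|Ff x|) <= lam.
  have pl0 : 0 < p%:R * lam ^+ p.-1 by apply: mulr_gt0; [rewrite ltr0n | exact: exprn_gt0].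
  rewrite -(ler_pM2l pl0) -EavgZ.
  apply: le_trans (_ : Eavg (fun x => M * (muS C x * `|Ff x| ^+ p) + p.-1%:R * lam ^+ p * w x) <= _).
    apply: ler_Eavg => x.
    have hy := @young R _ _ _ (normr_ge0 (Ff x)) lam0 p0.
    have := ler_wpM2l (w0 x) hy.
    have hwm : w x * `|Ff x| ^+ p <= M * (muS C x * `|Ff x| ^+ p).
      rewrite mulrA; apply: ler_wpM2r; [exact: exprn_ge0 | exact: wM].
    have -> : p%:R * lam ^+ p.-1 * (w x * `|Ff x|) = w x * (p%:R * lam ^+ p.-1 * `|Ff x|) by ring.
    move=> h; apply: le_trans h _.
    rewrite mulrDr; apply: lerD => //.
    by rewrite mulrC.
  rewrite EavgD !EavgZ hEw mulr1 -/Sp.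
  apply: le_trans (_ : M * th ^+ p + p.-1%:R * lam ^+ p <= _).
    by apply: lerD => //; apply: ler_wpM2l => //; exact: ltW.
  apply: le_trans (_ : lam ^+ p + p.-1%:R * lam ^+ p <= _); first by apply: lerD.
  have -> : lam ^+ p = lam ^+ p.-1 * lam by rewrite -exprSr prednK.
  have -> : (p%:R : R) = p.-1%:R + 1 by rewrite natr1 prednK.
  by rewrite le_eqVlt; apply/orP; left; apply/eqP; ring.
set X := Eavg (fun x => f x / alpha * w x).
pose A1 := Eavg (fun x => Ff x * w x).
pose A2 := Eavg (fun x => (f x / alpha - Ff x - u) * w x).
have hXe : X - u = A1 + A2.
  have -> : X = Eavg (fun x => Ff x * w x + (f x / alpha - Ff x - u) * w x + u * w x).
    by apply: eq_Eavg => x; ring.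
  by rewrite !EavgD EavgZ hEw mulr1 /A1 /A2; ring.
have hA1 : `|A1| <= lam.
  apply: le_trans (@norm_Eavg R G _) _; apply: le_trans hW.
  rewrite le_eqVlt; apply/orP; left; apply/eqP/eq_Eavg => x.
  by rewrite normrM (ger0_norm (w0 x)) mulrC.
have hA2 : `|A2| <= 2 * del * (M * u).
  apply: le_trans (@norm_Eavg R G _) _.
  apply: le_trans (_ : Eavg (fun x => 2 * del * (M * u) * w x) <= _); last first.
    by rewrite EavgZ hEw mulr1.
  apply: ler_Eavg => x; rewrite normrM (ger0_norm (w0 x)).
  case hx: (x \in C).
    by apply: ler_wpM2r => //; apply: hT.
  by rewrite wC ?hx // !mulr0.
exact: ar_final u0 del0 hA1 hA2 erefl (_ : del * M * 8 <= eps) hXe.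
Qed.
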